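(* Let $W$ be a nonnegative, integer-valued random variable with $p=\mathbb{P}(W=0)$. Let $N\sim\mathrm{Geom}(p)$ and suppose that either $W\leq_{hr}N$ or $N\leq_{hr}W$. Then $$d_{TV}(\mathcal{L}(W),\mathcal{L}(N))\leq\left|1-p(1+\mathbb{E}W)\right|.$$
   Context: $N\sim\mathrm{Geom}(p)$ means $\mathbb{P}(N=k)=p(1-p)^k$, $k\ge0$. For nonnegative integer-valued $T$, $r_T(j)=\mathbb{P}(T=j)/\mathbb{P}(T>j)$; $T\leq_{hr}U$ (hazard rate order) means $r_T(j)\geq r_U(j)$ for all $j$. $d_{TV}(\mathcal{L}(U),\mathcal{L}(V))=\sup_{A\subseteq\{0,1,2,\ldots\}}|\mathbb{P}(U\in A)-\mathbb{P}(V\in A)|$. *)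

(* Defs.v *)
(* Random variables with values in {0,1,2,...}
   are represented by their laws: probability mass functions on nat. *)
From HB Require Import structures.
From mathcomp Require Import all_boot all_order all_algebra.
From mathcomp Require Import all_classical all_reals ereal esum.
Set Implicit Arguments. Unset Strict Implicit. Unset Printing Implicit Defensive.
Import Order.TTheory GRing.Theory Num.Theory.
Local Open Scope classical_set_scope.
Local Open Scope ring_scope.

Section Defs.
Variable R : realType.

Definition is_pmf (q : nat -> R) : Prop :=
  (forall k, 0 <= q k) /\ (\esum_(k in [set: nat]) (q k)%:E = 1)%E.

Definition prob (q : nat -> R) (A : set nat) : \bar R :=
  \esum_(k in A) (q k)%:E.

Definition tail (q : nat -> R) (j : nat) : \bar R :=
  prob q [set k | (j < k)%N].

Definition hazard (q : nat -> R) (j : nat) : \bar R :=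
  if tail q j == 0%E then +oo%E else ((q j) / fine (tail q j))%:E.

Definition hr_le (qT qU : nat -> R) : Prop :=
  forall j : nat, (hazard qU j <= hazard qT j)%E.

Definition geom_pmf (p : R) : nat -> R := fun k => p * (1 - p) ^+ k.

Definition expect (q : nat -> R) : \bar R :=
  \esum_(k in [set: nat]) (k%:R * q k)%:E.

Definition dTV (q1 q2 : nat -> R) : \bar R :=
  ereal_sup [set `|(prob q1 A - prob q2 A)%E|%E | A in [set: set nat]].

End Defs.

(* Main.v *)
Require Import Defs.
From HB Require Import structures.
From mathcomp Require Import all_boot all_order all_algebra.
From mathcomp Require Import all_classical all_reals ereal esum.
From mathcomp Require Import sequences normedtype.
From mathcomp Require Import ring lra.
Import Order.TTheory GRing.Theory Num.Theory.
Local Open Scope classical_set_scope.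
Local Open Scope ring_scope.

Section Aux.
Variable R : realType.
Local Open Scope ereal_scope.

Lemma esum_splitT (f : nat -> \bar R) (B : set nat) : (forall k, 0 <= f k) ->
  \esum_(k in [set: nat]) f k = \esum_(k in B) f k + \esum_(k in ~` B) f k.
Proof. by move=> f0; rewrite (esumID B) // !setTI. Qed.

Lemma esum_leT (f : nat -> \bar R) (B : set nat) : (forall k, 0 <= f k) ->
  \esum_(k in B) f k <= \esum_(k in [set: nat]) f k.
Proof.
move=> f0; rewrite (@esum_splitT f B f0) leeDl //; exact: esum_ge0.
Qed.

Lemma esum_lt (f : nat -> R) n : (forall k, (0 <= f k)%R) ->
  \esum_(k in [set k | (k < n)%N]) (f k)%:E = (\sum_(k < n) f k)%:E.
Proof.
move=> f0; elim: n => [|n IH].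
  rewrite big_ord0 (_ : [set k | (k < 0)%N] = set0) ?esum_set0 //.
  by apply/seteqP; split => k //=.
rewrite (esumID [set k | (k < n)%N]); last by move=> *; rewrite lee_fin.
rewrite (_ : _ `&` _ = [set k | (k < n)%N]); last first.
  by apply/seteqP; split => k /=; [case|split => //; apply: ltnW].
rewrite (_ : _ `&` _ = [set n]); last first.
  apply/seteqP; split => k /=; first by move=> [] ? /negP; rewrite -leqNgt => ?; apply/eqP; rewrite eqn_leq; apply/andP; split.
  by move=> ->; split => //; apply/negP; rewrite ltnn.
by rewrite IH esum_set1 ?lee_fin // big_ord_recr /= EFinD.
Qed.


Lemma esum_tail (q : nat -> R) j : is_pmf q ->
  \esum_(k in [set k | (j <= k)%N]) (q k)%:E = (1 - \sum_(k < j) q k)%:E.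
Proof.
move=> [q0 q1].
have := @esum_splitT (fun k => (q k)%:E) [set k | (k < j)%N] (fun k => q0 k).
rewrite q1 esum_lt //.
rewrite (_ : ~` _ = [set k | (j <= k)%N]); last first.
  by apply/seteqP; split => k /=; [move/negP; rewrite -leqNgt | rewrite leqNgt => /negP].
case: (esum _ _) => [r||] //= H.
move: H => [H]; rewrite H; congr (_%:E); ring.
Qed.

Lemma esum_geom (p : R) : (0 < p)%R -> (p <= 1)%R ->
  \esum_(k in [set: nat]) (geom_pmf p k)%:E = 1.
Proof.
move=> p0 p1; rewrite -nneseries_esumT; last first.
  by move=> n; rewrite lee_fin /geom_pmf; apply: mulr_ge0; [exact: ltW | apply: exprn_ge0; rewrite subr_ge0].
apply: cvg_lim => //.
apply: cvg_EFin; first by apply: nearW => n; rewrite sumEFin.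
rewrite (_ : _ \o _ = series (geometric p (1 - p))); last first.
  by apply/funext => n /=; rewrite sumEFin /= /series /=.
have Hn : (`|1 - p| < 1)%R by rewrite ger0_norm ?subr_ge0 //; lra.
have := @cvg_geometric_series R p (1 - p) Hn.
have -> : (1 - (1 - p) = p)%R by ring.
by rewrite divff // gt_eqF.
Qed.

Lemma tail_sum (q : nat -> R) : is_pmf q ->
  \esum_(j in [set: nat]) (1 - \sum_(k < j) q k)%:E =
  \esum_(k in [set: nat]) (k.+1%:R * q k)%:E.
Proof.
move=> Hq; have q0 := Hq.1.
rewrite (@eq_esum R nat [set: nat] _ (fun j => \esum_(k in [set k | (j <= k)%N]) (q k)%:E)); last by move=> j _; rewrite esum_tail.
rewrite esum_esum; last by move=> *; rewrite lee_fin.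
have E : forall k, (k.+1%:R * q k)%:E =
   \esum_(j in [set j | (j < k.+1)%N]) (q k)%:E.
  by move=> k; rewrite esum_lt // sumr_const card_ord mulr_natl.
rewrite (@eq_esum R nat [set: nat] _ (fun k => \esum_(j in [set j | (j < k.+1)%N]) (q k)%:E)); last by move=> k _; apply: E.
rewrite esum_esum; last by move=> *; rewrite lee_fin.
rewrite (reindex_esum ([set: nat] `*`` (fun k => [set j | (j < k.+1)%N])) _ (fun x : nat * nat => (x.2, x.1))) //.
split=> /=.
- by move=> [i j] [_ /= h].
- by move=> [i1 i2] [j1 j2] /= _ _ [] -> ->.
- by move=> [i j] [_ /= h]; exists (j, i).
Qed.

Lemma fin_of (x x' : \bar R) : 0 <= x -> 0 <= x' -> x + x' = 1 -> x = (fine x)%:E.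
Proof.
move=> x0 x'0 H; rewrite fineK // ge0_fin_numE //.
have : x <= 1 by rewrite -H leeDl.
move=> /le_lt_trans; apply; exact: ltry.
Qed.

Lemma fin_ex (x x' : \bar R) : 0 <= x -> 0 <= x' -> x + x' = 1 -> exists r : R, x = r%:E.
Proof. by move=> h1 h2 e; exists (fine x); exact: (@fin_of x x' h1 h2 e). Qed.
Arguments fin_ex {x x'}.

Lemma final_A (x x' y y' D E : \bar R) : 0 <= x -> 0 <= x' -> 0 <= y -> 0 <= y' ->
  0 <= D -> 0 <= E -> x + x' = 1 -> y + y' = 1 -> y <= x + D -> y' <= x' + D ->
  D + E = 1 -> `|x - y| <= `|1 - E|.
Proof.
move=> h1 h2 h3 h4 h5 h6 e1 e2 l1 l2 e3.
have [a Ea] := fin_ex h1 h2 e1.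
have [c Ec] := fin_ex h3 h4 e2.
have [f Ef] := fin_ex h5 h6 e3.
rewrite addeC in e1; rewrite addeC in e2; rewrite addeC in e3.
have [b Eb] := fin_ex h2 h1 e1.
have [d Ed] := fin_ex h4 h3 e2.
have [g Eg] := fin_ex h6 h5 e3.
subst.
move: e1 e2 e3 l1 l2 h1 h2 h3 h4 h5 h6.
rewrite -!EFinD !lee_fin => -[e1] [e2] [e3] l1 l2 h1 h2 h3 h4 h5 h6.
rewrite (ger0_norm (x := 1 - g)); last lra.
rewrite ler_norml; apply/andP; split; lra.
Qed.

Lemma final_B (x x' y y' D E : \bar R) : 0 <= x -> 0 <= x' -> 0 <= y -> 0 <= y' ->
  0 <= D -> 0 <= E -> x + x' = 1 -> y + y' = 1 -> x <= y + D -> x' <= y' + D ->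
  D + 1 = E -> `|x - y| <= `|1 - E|.
Proof.
move=> h1 h2 h3 h4 h5 h6 e1 e2 l1 l2 e3.
have [a Ea] := fin_ex h1 h2 e1.
have [c Ec] := fin_ex h3 h4 e2.
rewrite addeC in e1; rewrite addeC in e2.
have [b Eb] := fin_ex h2 h1 e1.
have [d Ed] := fin_ex h4 h3 e2.
subst x y x' y'.
case: E e3 h6 => [g||] //=; last by move=> _ _; rewrite leey.
case: D h5 l1 l2 => [f||] //= h5 l1 l2 [e3] h6.
move: e1 e2 l1 l2 h1 h2 h3 h4 h5 h6.
rewrite -!EFinD !lee_fin => -[e1] [e2] l1 l2 h1 h2 h3 h4 h5 h6.
rewrite (ler0_norm (x := 1 - g)); last lra.
rewrite ler_norml; apply/andP; split; lra.
Qed.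

Lemma prob_le_add (f h c : nat -> R) (A : set nat) :
  (forall j, 0 <= (h j)%:E) -> (forall j, 0 <= (c j)%:E) ->
  (forall j, (f j <= h j + c j)%R) ->
  prob f A <= prob h A + \esum_(j in [set: nat]) (c j)%:E.
Proof.
move=> h0 c0 fhc; rewrite /prob.
apply: (@le_trans _ _ (\esum_(k in A) ((h k)%:E + (c k)%:E))).
  by apply: le_esum => k _; rewrite -EFinD lee_fin.
rewrite esumD //; apply: leeD2l; exact: esum_leT.
Qed.

Lemma esumZ' (x : R) (f : nat -> R) : (forall j, (0 <= f j)%R) -> (0 <= x)%R ->
  (x%:E * (\esum_(j in [set: nat]) (f j)%:E) = \esum_(j in [set: nat]) (x * f j)%:E)%E.
Proof.
move=> f0 x0; rewrite -!nneseries_esumT; last 2 first.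
- by move=> n; rewrite lee_fin mulr_ge0.
- by move=> n; rewrite lee_fin.
by rewrite -nneseriesZl //; move=> n _; rewrite lee_fin.
Qed.

Lemma expect_eq (q : nat -> R) : is_pmf q ->
  1 + expect q = \esum_(k in [set: nat]) (k.+1%:R * q k)%:E.
Proof.
move=> [q0 q1]; rewrite -q1 /expect -esumD; last 2 first.
- by move=> k _; rewrite lee_fin.
- by move=> k _; rewrite lee_fin mulr_ge0.
apply: eq_esum => k _; rewrite -EFinD; congr (_%:E).
by rewrite -addn1 natrD; ring.
Qed.

Lemma geom_partial (p : R) n : (\sum_(k < n) geom_pmf p k = 1 - (1 - p) ^+ n)%R.
Proof.
elim: n => [|n IH]; first by rewrite big_ord0 expr0 subrr.
by rewrite big_ord_recr /= IH /geom_pmf exprSr; ring.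
Qed.

End Aux.

Theorem theorem5p2 (R : realType) (qW : nat -> R) :
  is_pmf qW ->
  0 < qW 0%N ->
  hr_le qW (geom_pmf (qW 0%N)) \/ hr_le (geom_pmf (qW 0%N)) qW ->
  (dTV qW (geom_pmf (qW 0%N))
     <= `| 1 - (qW 0%N)%:E * (1 + expect qW) |)%E.
Proof.
move=> Hq; have [q0 q1] := Hq.
set p := qW 0%N => p0 Hhr.
have p1 : p <= 1.
  have := @esum_leT R (fun k => (qW k)%:E) [set 0%N] (fun k => q0 k).
  by rewrite esum_set1 ?lee_fin // q1 lee_fin.
set a := fun j => 1 - \sum_(k < j) qW k.
have a_ge0 j : 0 <= a j.
  rewrite -lee_fin /a -esum_tail //; by apply: esum_ge0 => k _; rewrite lee_fin.
have a_rec j : a j = qW j + a j.+1 by rewrite /a big_ord_recr /=; ring.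
have a00 : a 0%N = 1 by rewrite /a big_ord0 subr0.
have tq j : tail qW j = (a j.+1)%:E by rewrite /tail /prob -esum_tail.
set g := geom_pmf p.
have g0 j : 0 <= g j.
  by rewrite /g /geom_pmf; apply: mulr_ge0; [exact: ltW | apply: exprn_ge0; rewrite subr_ge0].
have Hg : is_pmf g by split => //; exact: esum_geom.
have tg j : tail g j = ((1 - p) ^+ j.+1)%:E.
  by rewrite /tail /prob (@esum_tail R g j.+1 Hg) geom_partial; congr (_%:E); ring.
have ez (r : R) : (r%:E == 0%E) = (r == 0) := eqe r 0.
have aq j : qW j <= a j by rewrite a_rec lerDl.
have gE j k : g k = p * (1 - p) ^+ k by [].
have Hcase : (forall j, p * a j <= qW j) \/ (forall j, qW j <= p * a j).
  case: Hhr => H; [left|right] => j; have := H j; rewrite /hazard tq tg.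
  - have [a0|an0] := eqVneq (a j.+1) 0.
      move=> _; rewrite a_rec a0 addr0; have := q0 j; nra.
    rewrite !ez (negbTE an0).
    case: eqP => [_|/eqP bn0]; first by rewrite /= leye_eq.
    rewrite lee_fin /= /geom_pmf.
    have pn1 : 1 - p != 0 by apply: contraNneq bn0 => ->; rewrite expr0n.
    have pl : 0 < 1 - p by rewrite lt_neqAle eq_sym pn1 subr_ge0.
    have ap : 0 < a j.+1 by rewrite lt_neqAle eq_sym an0 a_ge0.
    rewrite [X in X <= _](_ : _ = p / (1 - p)); last first.
      by rewrite exprSr; field; rewrite pn1 expf_neq0.
    rewrite ler_pdivlMr // mulrAC ler_pdivrMr // (a_rec j) => h; nra.
  - have [pe|pn] := eqVneq p 1; first by rewrite pe mul1r.
    have pl : 0 < 1 - p by rewrite subr_gt0 lt_neqAle pn.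
    have bn0 : (1 - p) ^+ j.+1 != 0 by rewrite expf_neq0 // gt_eqF.
    rewrite !ez (negbTE bn0).
    case: eqP => [_|/eqP an0]; first by rewrite /= leye_eq.
    rewrite lee_fin /= /geom_pmf.
    have ap : 0 < a j.+1 by rewrite lt_neqAle eq_sym an0 a_ge0.
    rewrite [X in _ <= X](_ : _ = p / (1 - p)); last first.
      by rewrite exprSr; field; rewrite gt_eqF // expf_neq0 // gt_eqF.
    rewrite ler_pdivlMr // mulrAC ler_pdivrMr // (a_rec j) => h; nra.
have p1' : 0 <= 1 - p by rewrite subr_ge0.
set b := fun j => (1 - p) ^+ j.
have gb j : g j = p * b j by [].
set c := fun j => p * `|b j - a j|.
have c0 j : (0 <= (c j)%:E)%E by rewrite lee_fin mulr_ge0 // ltW.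
have qE0 j : (0 <= (qW j)%:E)%E by rewrite lee_fin.
have gE0 j : (0 <= (g j)%:E)%E by rewrite lee_fin.
have aE0 j : (0 <= (a j)%:E)%E by rewrite lee_fin.
have EE : ((qW 0%N)%:E * (1 + expect qW) = \esum_(j in [set: nat]) (p * a j)%:E)%E.
  by rewrite expect_eq // -tail_sum // esumZ' // ltW.
rewrite EE.
have split1 (f : nat -> R) A : (forall j, 0 <= f j) ->
    (prob f A + prob f (~` A) = \esum_(j in [set: nat]) (f j)%:E)%E.
  by move=> f0; rewrite /prob (@esum_splitT R (fun j => (f j)%:E) A) // => j; rewrite lee_fin.
have pr0 (f : nat -> R) A : (forall j, 0 <= f j) -> (0 <= prob f A)%E.
  by move=> f0; apply: esum_ge0 => j _; rewrite lee_fin.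
have D0 : (0 <= \esum_(j in [set: nat]) (c j)%:E)%E by apply: esum_ge0.
have E0 : (0 <= \esum_(j in [set: nat]) (p * a j)%:E)%E.
  by apply: esum_ge0 => j _; rewrite lee_fin mulr_ge0 // ltW.
rewrite /dTV; apply: ge_ereal_sup => _ [A _ <-].
case: Hcase => H.
- have ab j : a j <= b j.
    elim: j => [|j IH]; first by rewrite a00 /b expr0.
    have := a_rec j; have := H j; rewrite /b exprS => h1 h2; move: IH; rewrite /b => IH; nra.
  have cE j : c j = p * (b j - a j) by rewrite /c ger0_norm // subr_ge0.
  apply: (@final_A R _ (prob qW (~` A)) _ (prob g (~` A)) (\esum_(j in [set: nat]) (c j)%:E)).
  all: try by apply: pr0.
  + by [].
  + by rewrite split1.
  + by rewrite split1 //; case: Hg.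
  + by apply: prob_le_add => // j; rewrite cE gb; have := H j; lra.
  + by apply: prob_le_add => // j; rewrite cE gb; have := H j; lra.
  + rewrite -esumD //; last by move=> j _; rewrite lee_fin mulr_ge0 // ltW.
    rewrite -Hg.2; apply: eq_esum => j _; rewrite -EFinD cE gb; congr (_%:E); ring.
- have ab j : b j <= a j.
    elim: j => [|j IH]; first by rewrite a00 /b expr0.
    have := a_rec j; have := H j; rewrite /b exprS => h1 h2; move: IH; rewrite /b => IH; nra.
  have cE j : c j = p * (a j - b j) by rewrite /c distrC ger0_norm // subr_ge0.
  apply: (@final_B R _ (prob qW (~` A)) _ (prob g (~` A)) (\esum_(j in [set: nat]) (c j)%:E)).
  all: try by apply: pr0.
  + by [].
  + by rewrite split1.
  + by rewrite split1 //; case: Hg.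
  + by apply: prob_le_add => // j; rewrite cE gb; have := H j; lra.
  + by apply: prob_le_add => // j; rewrite cE gb; have := H j; lra.
  + rewrite -Hg.2 -esumD //.
    apply: eq_esum => j _; rewrite -EFinD cE gb; congr (_%:E); ring.
Qed.
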